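(* (i) Let $\|\cdot\|$ be a URTC-norm on $\mathbb{R}^2$ with unit sphere $S$. If $a,b,c,d\in S$ satisfy $\|a-d\|=\|b-c\|=1$ and the 6-tuple $(a-d,a,b,c,d,d-a)$ is positively oriented, then $a=b$ and $c=d$. (ii) Let $\|\cdot\|$ be an arbitrary norm on $\mathbb{R}^2$, let $a,b\in\mathbb{R}^2$ with $\gamma:=\|a-b\|>0$, and let $\alpha,\beta\ge 0$ satisfy $|\beta-\gamma|\le\alpha\le\beta+\gamma$. Then there exists $c\in\mathbb{R}^2$ with $\|a-c\|=\beta$ and $\|b-c\|=\alpha$.
   Context: A norm $\|\cdot\|$ on $\mathbb{R}^2$ is called a URTC-norm if for every $a,b\in\mathbb{R}^2$ with $\|a-b\|=1$ the system $\|a-x\|=1$, $\|b-x\|=1$ is satisfied by exactly two points $x\in\mathbb{R}^2$. $S=\{x:\|x\|=1\}$ is the unit sphere (a closed convex curve around $0$). A tuple of points of $S$ is positively oriented if the points appear in this order (not necessarily distinct) when traversing $S$ counterclockwise from the first to the last point of the tuple (here $a-d$ and $d-a$ are antipodal points of $S$, so the tuple lies on a half of $S$). *)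

(* Defs.v *)
From Stdlib Require Import Reals List.
Open Scope R_scope.

Definition pt := (R * R)%type.
Definition vadd (x y : pt) : pt := (fst x + fst y, snd x + snd y).
Definition vsub (x y : pt) : pt := (fst x - fst y, snd x - snd y).
Definition vscal (t : R) (x : pt) : pt := (t * fst x, t * snd x).
Definition vzero : pt := (0, 0).

Definition is_norm (N : pt -> R) : Prop :=
  (forall x, N x = 0 -> x = vzero) /\
  (forall t x, N (vscal t x) = Rabs t * N x) /\
  (forall x y, N (vadd x y) <= N x + N y).

Definition URTC (N : pt -> R) : Prop :=
  is_norm N /\
  forall a b, N (vsub a b) = 1 ->
    exists x y, x <> y /\
      forall z, (N (vsub a z) = 1 /\ N (vsub b z) = 1) <-> (z = x \/ z = y).

Definition on_sphere (N : pt -> R) (x : pt) : Prop := N x = 1.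

Definition on_ray (p : pt) (t : R) : Prop :=
  exists r, 0 < r /\ p = (r * cos t, r * sin t).

(* A tuple (list) of nonzero points is positively oriented if, traversing
   counterclockwise (less than a full turn) from the first point to the last,
   the points appear in the listed order (repetitions allowed): there are
   nondecreasing angles t_0 <= ... <= t_{n-1} with t_{n-1} < t_0 + 2 PI and
   the i-th point in direction t_i. *)
Definition pos_oriented (l : list pt) : Prop :=
  exists t : nat -> R,
    (forall i, (S i < length l)%nat -> t i <= t (S i)) /\
    t (length l - 1)%nat < t O + 2 * PI /\
    (forall i, (i < length l)%nat -> on_ray (nth i l vzero) (t i)).

(* Main.v *)
Require Import Defs.
From Stdlib Require Import Reals List Lra Lia Classical.
Import ListNotations.
Open Scope R_scope.

Ltac veq := unfold vsub, vadd, vscal, vzero; simpl; f_equal; field.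

Section S.
Variable N : pt -> R.
Hypothesis HN : is_norm N.

Lemma Ntri x y : N (vadd x y) <= N x + N y.
Proof. destruct HN as [_ [_ H]]; apply H. Qed.
Lemma Nscal t x : N (vscal t x) = Rabs t * N x.
Proof. destruct HN as [_ [H _]]; apply H. Qed.
Lemma Nzero x : N x = 0 -> x = vzero.
Proof. destruct HN as [H _]; apply H. Qed.

Lemma Rabs_m1 : Rabs (-1) = 1.
Proof. rewrite Rabs_left; lra. Qed.

Lemma N0 : N vzero = 0.
Proof. replace vzero with (vscal 0 vzero) by veq. rewrite Nscal, Rabs_R0; ring. Qed.

Lemma Nnn x : 0 <= N x.
Proof.
  assert (H := Ntri x (vscal (-1) x)).
  replace (vadd x (vscal (-1) x)) with vzero in H by veq.
  rewrite N0, Nscal, Rabs_m1 in H. lra.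
Qed.

Lemma Nsym x y : N (vsub x y) = N (vsub y x).
Proof.
  replace (vsub y x) with (vscal (-1) (vsub x y)) by veq.
  rewrite Nscal, Rabs_m1; ring.
Qed.

Lemma Nspos t x : 0 <= t -> N (vscal t x) = t * N x.
Proof. intro; rewrite Nscal, Rabs_pos_eq; auto. Qed.

Lemma Nlip x y : Rabs (N x - N y) <=
  Rabs (fst x - fst y) * N (1,0) + Rabs (snd x - snd y) * N (0,1).
Proof.
  assert (G : forall x y, N x - N y <=
    Rabs (fst x - fst y) * N (1,0) + Rabs (snd x - snd y) * N (0,1)).
  { clear x y; intros x y.
    assert (H1 := Ntri y (vsub x y)).
    replace (vadd y (vsub x y)) with x in H1 by (destruct x; veq).
    assert (H2 := Ntri (vscal (fst x - fst y) (1,0)) (vscal (snd x - snd y) (0,1))).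
    replace (vadd (vscal (fst x - fst y) (1, 0)) (vscal (snd x - snd y) (0, 1)))
      with (vsub x y) in H2 by veq.
    rewrite !Nscal in H2. lra. }
  apply Rabs_le; split.
  - assert (H := G y x).
    rewrite (Rabs_minus_sym (fst y)), (Rabs_minus_sym (snd y)) in H. lra.
  - apply G.
Qed.

Lemma Ncont f1 f2 t0 : continuity_pt f1 t0 -> continuity_pt f2 t0 ->
  continuity_pt (fun t => N (f1 t, f2 t)) t0.
Proof.
  intros H1 H2 eps Heps.
  set (K := N (1,0) + N (0,1) + 1).
  assert (HK : 0 < K) by (unfold K; generalize (Nnn (1,0)) (Nnn (0,1)); lra).
  assert (He : eps / (2*K) > 0) by (apply Rdiv_lt_0_compat; lra).
  destruct (H1 _ He) as [a1 [Ha1 Hb1]].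
  destruct (H2 _ He) as [a2 [Ha2 Hb2]].
  exists (Rmin a1 a2); split.
  { apply Rmin_pos; lra. }
  intros x [Dx Hx].
  assert (Hm1 := Rmin_l a1 a2). assert (Hm2 := Rmin_r a1 a2).
  simpl in *. unfold Rdist in *.
  assert (Hx1 : Rabs (x - t0) < a1) by lra.
  assert (Hx2 : Rabs (x - t0) < a2) by lra.
  specialize (Hb1 x (conj Dx Hx1)).
  specialize (Hb2 x (conj Dx Hx2)).
  eapply Rle_lt_trans. apply (Nlip (f1 x, f2 x) (f1 t0, f2 t0)).
  simpl.
  assert (N (1,0) <= K) by (unfold K; generalize (Nnn (0,1)); lra).
  assert (N (0,1) <= K) by (unfold K; generalize (Nnn (1,0)); lra).
  assert (E : eps = (eps / (2*K)) * K + (eps/(2*K)) * K) by (field; lra).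
  rewrite E.
  apply Rplus_lt_le_compat.
  - apply Rle_lt_trans with (Rabs (f1 x - f1 t0) * K).
    + apply Rmult_le_compat_l; [apply Rabs_pos | lra].
    + apply Rmult_lt_compat_r; lra.
  - apply Rle_trans with (Rabs (f2 x - f2 t0) * K).
    + apply Rmult_le_compat_l; [apply Rabs_pos | lra].
    + apply Rmult_le_compat_r; lra.
Qed.


Lemma mono x y z l m : N x = 1 -> N y = 1 -> N z = 1 -> 0 <= l -> 0 <= m ->
  z = vsub (vscal l y) (vscal m x) -> N (vsub y x) <= N (vsub z x).
Proof.
  intros Hx Hy Hz Hl Hm Ez.
  set (r := N (vsub z x)).
  assert (F1 : l <= 1 + m).
  { assert (H := Ntri z (vscal m x)).
    replace (vadd z (vscal m x)) with (vscal l y) in H by (rewrite Ez; veq).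
    rewrite !Nspos in H by lra. rewrite Hx, Hy, Hz in H. lra. }
  assert (F2 : 1 + m <= l + m * r).
  { assert (H := Ntri (vscal l y) (vscal m (vsub z x))).
    replace (vadd (vscal l y) (vscal m (vsub z x))) with (vscal (1+m) z) in H
      by (rewrite Ez; veq).
    rewrite !Nspos in H by lra. rewrite Hy, Hz in H. unfold r; lra. }
  destruct (Req_dec l 0) as [Hl0|Hl0].
  - subst l.
    assert (Hm1 : m = 1).
    { rewrite Ez in Hz.
      replace (vsub (vscal 0 y) (vscal m x)) with (vscal (-m) x) in Hz by veq.
      rewrite Nscal, Rabs_Ropp, Rabs_pos_eq, Hx in Hz by lra. lra. }
    subst m.
    assert (H := Ntri y (vscal (-1) x)).
    replace (vadd y (vscal (-1) x)) with (vsub y x) in H by veq.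
    rewrite Nscal, Rabs_m1 in H.
    unfold r. replace (vsub z x) with (vscal (-2) x) by (rewrite Ez; veq).
    rewrite Nscal, Rabs_left, Hx by lra. rewrite Hy, Hx in H. lra.
  - assert (Hlp : 0 < l) by lra.
    set (k := l - m).
    assert (E : N (vsub z (vscal k x)) = l * N (vsub y x)).
    { replace (vsub z (vscal k x)) with (vscal l (vsub y x)) by (rewrite Ez; unfold k; veq).
      apply Nspos; lra. }
    assert (Hr : 0 <= r) by apply Nnn.
    assert (HD : 0 <= N (vsub y x)) by apply Nnn.
    destruct (Rle_dec 0 k) as [Hk|Hk].
    + assert (H := Ntri (vscal (1-k) z) (vscal k (vsub z x))).
      replace (vadd (vscal (1-k) z) (vscal k (vsub z x))) with (vsub z (vscal k x)) in H by veq.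
      rewrite !Nspos in H by (unfold k in *; lra). fold r in H.
      rewrite E, Hz in H.
      assert (l * N (vsub y x) <= l * r) by (unfold k in *; nra).
      fold r. nra.
    + assert (H := Ntri (vscal (-k) (vscal l y)) (vscal (m+k) z)).
      replace (vadd (vscal (-k) (vscal l y)) (vscal (m+k) z)) with
        (vscal m (vsub z (vscal k x))) in H by (rewrite Ez; unfold k; veq).
      rewrite !Nspos in H by (unfold k in *; lra).
      rewrite E, Hy, Hz in H.
      assert (Hmp : 0 < m) by (unfold k in *; lra).
      assert (m * l * N (vsub y x) <= m * l * r) by (unfold k in *; nra).
      fold r.
      apply Rmult_le_reg_l with (m*l). nra. lra.
Qed.

Definition det (u v : pt) := fst u * snd v - snd u * fst v.

Lemma parallel u v : N u = 1 -> N v = 1 -> det u v = 0 ->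
  v = u \/ v = vscal (-1) u.
Proof.
  intros Hu Hv Hd. unfold det in Hd.
  assert (Hne : u <> vzero) by (intro E; rewrite E, N0 in Hu; lra).
  assert (exists k, v = vscal k u) as [k Hk].
  { destruct u as [u1 u2], v as [v1 v2]; simpl in *.
    destruct (Req_dec u1 0) as [H1|H1].
    - destruct (Req_dec u2 0) as [H2|H2].
      + subst; exfalso; apply Hne; reflexivity.
      + exists (v2 / u2). unfold vscal; simpl; f_equal.
        * subst u1. assert (v1 * u2 = 0) by lra.
          apply Rmult_integral in H; destruct H; [subst; field; auto|lra].
        * field; auto.
    - exists (v1 / u1). unfold vscal; simpl; f_equal.
      + field; auto.
      + apply Rmult_eq_reg_l with u1; auto. field_simplify; auto. lra. }
  rewrite Hk, Nscal, Hu in Hv.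
  destruct (Rle_dec 0 k).
  - rewrite Rabs_pos_eq in Hv by lra. left. rewrite Hk. replace k with 1 by lra. destruct u; veq.
  - rewrite Rabs_left in Hv by lra. right. rewrite Hk. replace k with (-1) by lra. reflexivity.
Qed.

End S.

Lemma cpt_plus f g x : continuity_pt f x -> continuity_pt g x -> continuity_pt (fun t => f t + g t) x.
Proof. apply continuity_pt_plus. Qed.
Lemma cpt_minus f g x : continuity_pt f x -> continuity_pt g x -> continuity_pt (fun t => f t - g t) x.
Proof. apply continuity_pt_minus. Qed.
Lemma cpt_mult f g x : continuity_pt f x -> continuity_pt g x -> continuity_pt (fun t => f t * g t) x.
Proof. apply continuity_pt_mult. Qed.
Lemma cpt_const c x : continuity_pt (fun _ => c) x.
Proof. apply continuity_pt_const. intros ? ?; reflexivity. Qed.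
Lemma cpt_divc c f x : continuity_pt f x -> f x <> 0 -> continuity_pt (fun t => c / f t) x.
Proof. intros H1 H2. unfold Rdiv. apply (cpt_mult (fun _ => c) (fun t => / f t)).
  apply cpt_const. apply (continuity_pt_inv f); auto. Qed.

Definition pp (d : pt) (t : R) : pt :=
  (cos t * fst d - sin t * snd d, cos t * snd d + sin t * fst d).

Lemma pp_pos N d t : is_norm N -> 0 < N d -> 0 < N (pp d t).
Proof.
  intros HN Hd. destruct (Rle_lt_or_eq_dec 0 _ (Nnn N HN (pp d t))) as [H|H]; auto.
  exfalso. symmetry in H. apply (Nzero N HN) in H.
  assert (E1 : fst d = cos t * fst (pp d t) + sin t * snd (pp d t)).
  { transitivity ((Rsqr (sin t) + Rsqr (cos t)) * fst d). rewrite sin2_cos2; ring. unfold pp, Rsqr; simpl; ring. }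
  assert (E2 : snd d = cos t * snd (pp d t) - sin t * fst (pp d t)).
  { transitivity ((Rsqr (sin t) + Rsqr (cos t)) * snd d). rewrite sin2_cos2; ring. unfold pp, Rsqr; simpl; ring. }
  rewrite H in E1, E2. simpl in E1, E2.
  assert (d = vzero) by (destruct d; unfold vzero; simpl in *; f_equal; lra).
  rewrite H0, (N0 N HN) in Hd. lra.
Qed.

Lemma part2 : forall (N : pt -> R) (a b : pt) (alpha beta : R),
      is_norm N ->
      0 < N (vsub a b) ->
      0 <= alpha -> 0 <= beta ->
      Rabs (beta - N (vsub a b)) <= alpha <= beta + N (vsub a b) ->
      exists c : pt, N (vsub a c) = beta /\ N (vsub b c) = alpha.
Proof.
  intros N a b alpha beta HN Hg Hal Hbe Hab.
  set (d := vsub a b) in *. set (gam := N d) in *.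
  set (V := fun t => vadd (vsub b a) (vscal (beta / N (pp d t)) (pp d t))).
  set (g := fun t => N (V t) - alpha).
  assert (Hc : continuity g).
  { intro t0. unfold g.
    apply (cpt_minus (fun t => N (V t)) (fun _ => alpha)); [|apply cpt_const].
    apply (Ncont N HN (fun t => fst (V t)) (fun t => snd (V t))).
    - change (continuity_pt (fun t => (fst b - fst a) + beta / N (pp d t) * (cos t * fst d - sin t * snd d)) t0).
      apply (cpt_plus (fun _ => _)); [apply cpt_const|].
      apply (cpt_mult (fun t => beta / N (pp d t))).
      + apply (cpt_divc beta (fun t => N (pp d t))).
        * apply (Ncont N HN (fun t => fst (pp d t)) (fun t => snd (pp d t))).
          -- change (continuity_pt (fun t => cos t * fst d - sin t * snd d) t0).
             apply (cpt_minus (fun t => cos t * fst d)); apply (cpt_mult _ (fun _ => _));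
               try apply cpt_const; [apply continuity_cos|apply continuity_sin].
          -- change (continuity_pt (fun t => cos t * snd d + sin t * fst d) t0).
             apply (cpt_plus (fun t => cos t * snd d)); apply (cpt_mult _ (fun _ => _));
               try apply cpt_const; [apply continuity_cos|apply continuity_sin].
        * generalize (pp_pos N d t0 HN Hg); lra.
      + apply (cpt_minus (fun t => cos t * fst d)); apply (cpt_mult _ (fun _ => _));
          try apply cpt_const; [apply continuity_cos|apply continuity_sin].
    - change (continuity_pt (fun t => (snd b - snd a) + beta / N (pp d t) * (cos t * snd d + sin t * fst d)) t0).
      apply (cpt_plus (fun _ => _)); [apply cpt_const|].
      apply (cpt_mult (fun t => beta / N (pp d t))).
      + apply (cpt_divc beta (fun t => N (pp d t))).
        * apply (Ncont N HN (fun t => fst (pp d t)) (fun t => snd (pp d t))).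
          -- change (continuity_pt (fun t => cos t * fst d - sin t * snd d) t0).
             apply (cpt_minus (fun t => cos t * fst d)); apply (cpt_mult _ (fun _ => _));
               try apply cpt_const; [apply continuity_cos|apply continuity_sin].
          -- change (continuity_pt (fun t => cos t * snd d + sin t * fst d) t0).
             apply (cpt_plus (fun t => cos t * snd d)); apply (cpt_mult _ (fun _ => _));
               try apply cpt_const; [apply continuity_cos|apply continuity_sin].
        * generalize (pp_pos N d t0 HN Hg); lra.
      + apply (cpt_plus (fun t => cos t * snd d)); apply (cpt_mult _ (fun _ => _));
          try apply cpt_const; [apply continuity_cos|apply continuity_sin]. }
  assert (P0 : pp d 0 = d) by (unfold pp; rewrite cos_0, sin_0; destruct d; veq).
  assert (PP : pp d PI = vscal (-1) d) by (unfold pp; rewrite cos_PI, sin_PI; veq).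
  assert (G0 : g 0 <= 0).
  { unfold g, V. rewrite P0. fold gam.
    replace (vadd (vsub b a) (vscal (beta / gam) d)) with (vscal ((beta - gam)/gam) d)
      by (unfold d; veq; lra).
    rewrite (Nscal N HN). fold gam. unfold Rdiv. rewrite Rabs_mult, Rabs_inv.
    rewrite (Rabs_pos_eq gam) by lra. replace (Rabs (beta - gam) * / gam * gam) with (Rabs (beta - gam)) by (field; lra).
    lra. }
  assert (G1 : 0 <= g PI).
  { unfold g, V. rewrite PP. rewrite (Nscal N HN), Rabs_m1. fold gam.
    replace (vadd (vsub b a) (vscal (beta / (1*gam)) (vscal (-1) d))) with (vscal (-(1 + beta/gam)) d)
      by (unfold d; veq; lra).
    rewrite (Nscal N HN), Rabs_Ropp, Rabs_pos_eq. fold gam.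
    replace ((1 + beta / gam) * gam) with (gam + beta) by (field; lra). lra.
    assert (0 <= beta / gam) by (apply Rmult_le_pos; [lra| left; apply Rinv_0_lt_compat; lra]). lra. }
  destruct (IVT_cor g 0 PI Hc ltac:(generalize PI_RGT_0; lra) ltac:(nra)) as [z [_ Hz]].
  assert (Hpz := pp_pos N d z HN Hg).
  exists (vsub a (vscal (beta / N (pp d z)) (pp d z))). split.
  - replace (vsub a (vsub a (vscal (beta / N (pp d z)) (pp d z)))) with (vscal (beta / N (pp d z)) (pp d z))
      by (veq; lra).
    rewrite (Nspos N HN). field; lra.
    apply Rmult_le_pos; [lra| left; apply Rinv_0_lt_compat; lra].
  - unfold g, V in Hz.
    replace (vsub b (vsub a (vscal (beta / N (pp d z)) (pp d z)))) with
      (vadd (vsub b a) (vscal (beta / N (pp d z)) (pp d z))) by (veq; lra). lra.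
Qed.

Lemma ray_det p q s u : on_ray p s -> on_ray q u ->
  exists rp rq, 0 < rp /\ 0 < rq /\ det p q = rp * rq * sin (u - s).
Proof.
  intros [rp [Hp Ep]] [rq [Hq Eq]]. exists rp, rq. split; auto. split; auto.
  subst; unfold det; simpl; rewrite sin_minus; ring.
Qed.

Lemma det_nn p q s u : on_ray p s -> on_ray q u -> 0 <= u - s <= PI -> 0 <= det p q.
Proof.
  intros H1 H2 Hr. destruct (ray_det p q s u H1 H2) as [rp [rq [? [? E]]]].
  rewrite E. assert (0 <= sin (u - s)) by (apply sin_ge_0; lra).
  apply Rmult_le_pos; [nra|auto].
Qed.

Lemma part1 : forall (N : pt -> R) (a b c d : pt),
      URTC N ->
      on_sphere N a -> on_sphere N b -> on_sphere N c -> on_sphere N d ->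
      N (vsub a d) = 1 -> N (vsub b c) = 1 ->
      pos_oriented [vsub a d; a; b; c; d; vsub d a] ->
      a = b /\ c = d.
Proof.
  intros N a b c d [HN HU] Ha Hb Hc Hd Had Hbc [t [Hmono [Hlast Hray]]].
  unfold on_sphere in *. simpl in Hlast.
  assert (m0 : t 0%nat <= t 1%nat) by (apply Hmono; simpl; lia).
  assert (m1 : t 1%nat <= t 2%nat) by (apply Hmono; simpl; lia).
  assert (m2 : t 2%nat <= t 3%nat) by (apply Hmono; simpl; lia).
  assert (m3 : t 3%nat <= t 4%nat) by (apply Hmono; simpl; lia).
  assert (m4 : t 4%nat <= t 5%nat) by (apply Hmono; simpl; lia).
  assert (r0 : on_ray (vsub a d) (t 0%nat)) by (exact (Hray 0%nat ltac:(simpl; lia))).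
  assert (r1 : on_ray a (t 1%nat)) by (exact (Hray 1%nat ltac:(simpl; lia))).
  assert (r2 : on_ray b (t 2%nat)) by (exact (Hray 2%nat ltac:(simpl; lia))).
  assert (r3 : on_ray c (t 3%nat)) by (exact (Hray 3%nat ltac:(simpl; lia))).
  assert (r4 : on_ray d (t 4%nat)) by (exact (Hray 4%nat ltac:(simpl; lia))).
  assert (r5 : on_ray (vsub d a) (t 5%nat)) by (exact (Hray 5%nat ltac:(simpl; lia))).
  assert (Hpi : t 5%nat - t 0%nat <= PI).
  { destruct (Rle_dec (t 5%nat - t 0%nat) PI) as [|Hn]; auto. exfalso.
    destruct (ray_det _ _ _ _ r0 r5) as [rp [rq [? [? E]]]].
    assert (sin (t 5%nat - t 0%nat) < 0) by (apply sin_lt_0; lra).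
    assert (det (vsub a d) (vsub d a) = 0) by (unfold det, vsub; simpl; ring).
    assert (0 < rp * rq) by nra. nra. }
  assert (D12 : 0 <= det a b) by (apply (det_nn _ _ _ _ r1 r2); lra).
  assert (D23 : 0 <= det b c) by (apply (det_nn _ _ _ _ r2 r3); lra).
  assert (D34 : 0 <= det c d) by (apply (det_nn _ _ _ _ r3 r4); lra).
  assert (D14 : 0 <= det a d) by (apply (det_nn _ _ _ _ r1 r4); lra).
  assert (D24 : 0 <= det b d) by (apply (det_nn _ _ _ _ r2 r4); lra).
  assert (HadP : 0 < det a d).
  { destruct (Req_dec (det a d) 0) as [E|]; [|lra]. exfalso.
    destruct (parallel N HN a d Ha Hd E) as [->| ->].
    - replace (vsub a a) with vzero in Had by (destruct a; veq). rewrite (N0 N HN) in Had. lra.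
    - replace (vsub a (vscal (-1) a)) with (vscal 2 a) in Had by veq.
      rewrite (Nspos N HN), Ha in Had; lra. }
  assert (HbcP : 0 < det b c).
  { destruct (Req_dec (det b c) 0) as [E|]; [|lra]. exfalso.
    destruct (parallel N HN b c Hb Hc E) as [->| ->].
    - replace (vsub b b) with vzero in Hbc by (destruct b; veq). rewrite (N0 N HN) in Hbc. lra.
    - replace (vsub b (vscal (-1) b)) with (vscal 2 b) in Hbc by veq.
      rewrite (Nspos N HN), Hb in Hbc; lra. }
  assert (HbdP : 0 < det b d).
  { destruct (Req_dec (det b d) 0) as [E|]; [|lra]. exfalso.
    destruct (parallel N HN b d Hb Hd E) as [Ed|Ed]; rewrite Ed in *.
    - assert (det c b = - det b c) by (unfold det; ring). lra.
    - assert (det a (vscal (-1) b) = - det a b) by (unfold det, vscal; simpl; ring). lra. }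
  assert (S1 : N (vsub c b) <= N (vsub d b)).
  { apply (mono N HN b c d (det b d / det b c) (det c d / det b c)); auto.
    - apply Rmult_le_pos; [lra| left; apply Rinv_0_lt_compat; lra].
    - apply Rmult_le_pos; [lra| left; apply Rinv_0_lt_compat; lra].
    - unfold det in *; destruct b, c, d; unfold vsub, vscal; simpl in *; f_equal; field; lra. }
  assert (S2 : N (vsub b d) <= N (vsub a d)).
  { apply (mono N HN d b a (det a d / det b d) (det a b / det b d)); auto.
    - apply Rmult_le_pos; [lra| left; apply Rinv_0_lt_compat; lra].
    - apply Rmult_le_pos; [lra| left; apply Rinv_0_lt_compat; lra].
    - unfold det in *; destruct a, b, d; unfold vsub, vscal; simpl in *; f_equal; field; lra. }
  rewrite (Nsym N HN c b) in S1. rewrite (Nsym N HN d b) in S1.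
  assert (Hbd : N (vsub b d) = 1) by lra.
  assert (Nz0 : forall u, N (vsub vzero u) = N u).
  { intro u. rewrite (Nsym N HN). f_equal. destruct u; veq. }
  assert (Hcd : c = d).
  { assert (Hb0 : N (vsub b vzero) = 1) by (rewrite (Nsym N HN), Nz0; auto).
    destruct (HU b vzero Hb0) as [x [y [Hxy Hiff]]].
    assert (Sc : c = x \/ c = y) by (apply Hiff; rewrite Nz0; auto).
    assert (Sd : d = x \/ d = y) by (apply Hiff; rewrite Nz0; auto).
    assert (Se : vsub b c = x \/ vsub b c = y).
    { apply Hiff. split.
      - replace (vsub b (vsub b c)) with c by (destruct c; veq). auto.
      - replace (vsub vzero (vsub b c)) with (vsub c b) by veq. rewrite (Nsym N HN); auto. }
    destruct (classic (c = d)) as [|Hne]; auto. exfalso.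
    assert (vsub b c = c \/ vsub b c = d) as [E|E].
    { destruct Sc as [Sc|Sc]; destruct Sd as [Sd|Sd]; destruct Se as [Se|Se];
        first [left; congruence | right; congruence | exfalso; congruence]. }
    - assert (b = vscal 2 c) by (destruct b, c; unfold vsub, vscal in *; simpl in *; injection E; intros; f_equal; lra).
      rewrite H, (Nspos N HN), Hc in Hb; lra.
    - assert (E1 : fst d = fst b - fst c) by (rewrite <- E; reflexivity).
      assert (E2 : snd d = snd b - snd c) by (rewrite <- E; reflexivity).
      assert (det c d = - det b c) by (unfold det; rewrite E1, E2; ring). lra. }
  subst d. split; auto.
  assert (Hc0 : N (vsub c vzero) = 1) by (rewrite (Nsym N HN), Nz0; auto).
  destruct (HU c vzero Hc0) as [x [y [Hxy Hiff]]].
  assert (Sa : a = x \/ a = y) by (apply Hiff; rewrite Nz0, (Nsym N HN); auto).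
  assert (Sb : b = x \/ b = y) by (apply Hiff; rewrite Nz0, (Nsym N HN); auto).
  assert (Se : vsub c a = x \/ vsub c a = y).
  { apply Hiff. split.
    - replace (vsub c (vsub c a)) with a by (destruct a; veq). auto.
    - replace (vsub vzero (vsub c a)) with (vsub a c) by veq. auto. }
  destruct (classic (a = b)) as [|Hne]; auto. exfalso.
  assert (vsub c a = a \/ vsub c a = b) as [E|E].
  { destruct Sa as [Sa|Sa]; destruct Sb as [Sb|Sb]; destruct Se as [Se|Se];
      first [left; congruence | right; congruence | exfalso; congruence]. }
  - assert (c = vscal 2 a) by (destruct a, c; unfold vsub, vscal in *; simpl in *; injection E; intros; f_equal; lra).
    rewrite H, (Nspos N HN), Ha in Hc; lra.
  - assert (E1 : fst b = fst c - fst a) by (rewrite <- E; reflexivity).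
    assert (E2 : snd b = snd c - snd a) by (rewrite <- E; reflexivity).
    assert (det b c = - det a b) by (unfold det; rewrite E1, E2; ring). lra.
Qed.

Theorem lemma2 :
  (forall (N : pt -> R) (a b c d : pt),
      URTC N ->
      on_sphere N a -> on_sphere N b -> on_sphere N c -> on_sphere N d ->
      N (vsub a d) = 1 -> N (vsub b c) = 1 ->
      pos_oriented [vsub a d; a; b; c; d; vsub d a] ->
      a = b /\ c = d) /\
  (forall (N : pt -> R) (a b : pt) (alpha beta : R),
      is_norm N ->
      0 < N (vsub a b) ->
      0 <= alpha -> 0 <= beta ->
      Rabs (beta - N (vsub a b)) <= alpha <= beta + N (vsub a b) ->
      exists c : pt, N (vsub a c) = beta /\ N (vsub b c) = alpha).
Proof. split; [exact part1 | exact part2]. Qed.
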